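(* Let $\mathfrak B_r^-$ and $\mathfrak B_r^+$ be the branches of the discrete Neumann correspondence $\mathfrak B_r$ (with the same $\lambda_*$ and the same choice of $A^{1/2}(\lambda_* )$) corresponding to opposite partitions $\mathbf w_-=\{w_1,\dots,w_r\mid-w_1,\dots,-w_r\}$ and $\mathbf w_+=\{-w_1,\dots,-w_r\mid w_1,\dots,w_r\}$ of the eigenvalues of $L(\lambda_* )$. Then for every initial point $(X,P)\in T^*V_{n,r}$, $$\mathfrak B_r^-\circ\mathfrak B_r^+(X,P)=(-X,-P).$$
   Context: $A=\mathrm{diag}(a_1,\dots,a_n)$, $A(\lambda)=\lambda\mathbf I_n-A$, $\lambda_*\ne a_i$, $A^{1/2}(\lambda_* )$ a fixed diagonal square root. $T^*V_{n,r}=\{(X,P): X^TX=\mathbf I_r,\ X^TP+P^TX=0\}$. $L(\lambda)=\begin{pmatrix} X^TA(\lambda)^{-1}P & X^TA(\lambda)^{-1}X\\ \mathbf I_r-P^TA(\lambda)^{-1}P & -P^TA(\lambda)^{-1}X\end{pmatrix}$; its eigenvalues at $\lambda_*$ come in pairs $\pm w$, and its spectrum is preserved by the map. A partition $\{w_1,\dots,w_r\mid-w_1,\dots,-w_r\}$ chooses $r$ eigenvalues $w_1,\dots,w_r$ of $L(\lambda_* )$, distinct with $w_i\ne-w_j$; with $\begin{pmatrix}\Xi\\ \Upsilon\end{pmatrix}$ the matrix of corresponding eigenvectors, $\Gamma=\Upsilon\Xi^{-1}$ is a symmetric solution of $\Gamma\mathbf U\Gamma+\Gamma\mathbf V+\mathbf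 V^T\Gamma-\mathbf W=0$ ($\mathbf U=X^TA^{-1}(\lambda_* )X$, $\mathbf V=X^TA^{-1}(\lambda_* )P$, $\mathbf W=\mathbf I_r-P^TA^{-1}(\lambda_* )P$), and the branch of $\mathfrak B_r$ for this partition is $\tilde X=A^{-1/2}(\lambda_* )(P+X\Gamma)$, $\tilde P=-A^{1/2}(\lambda_* )X+\tilde X\Gamma$. The partition is applied at each step to the eigenvalues of the current Lax matrix at $\lambda_*$. *)

(* Defs.v *)
From HB Require Import structures.
From mathcomp Require Import all_boot all_order all_algebra.
Set Implicit Arguments. Unset Strict Implicit. Unset Printing Implicit Defensive.
Import Order.TTheory GRing.Theory Num.Theory.
Local Open Scope ring_scope.

Section Neumann.
Variables (C : numClosedFieldType) (n r : nat).

Definition Amat (a : 'I_n -> C) (lam : C) : 'M[C]_n :=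
  diag_mx (\row_i (lam - a i)).

Definition Ainv (a : 'I_n -> C) (lam : C) : 'M[C]_n := invmx (Amat a lam).

Definition Lax (a : 'I_n -> C) (lam : C) (X P : 'M[C]_(n, r)) : 'M[C]_(r + r) :=
  block_mx (X^T *m Ainv a lam *m P) (X^T *m Ainv a lam *m X)
           (1%:M - P^T *m Ainv a lam *m P) (- (P^T *m Ainv a lam *m X)).

Definition in_TV (X P : 'M[C]_(n, r)) : Prop :=
  X^T *m X = 1%:M /\ X^T *m P + P^T *m X = 0.

(* [Xi; Ups] is a matrix of eigenvectors of L for the eigenvalues w_1..w_r,
   with Xi invertible (so that Gamma = Ups Xi^{-1} is defined). *)
Definition eigvec_mat (L : 'M[C]_(r + r)) (w : 'rV[C]_r) (Xi Ups : 'M[C]_r) : Prop :=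
  L *m col_mx Xi Ups = col_mx Xi Ups *m diag_mx w /\ Xi \in unitmx.

(* One step of the branch of B_r: given the diagonal square root
   A^{1/2}(lambda_star) = diag_mx d and Gamma = Ups Xi^{-1},
   Xt = A^{-1/2}(P + X Gamma), Pt = -A^{1/2} X + Xt Gamma. *)
Definition Bstep (d : 'rV[C]_n) (Xi Ups : 'M[C]_r) (X P : 'M[C]_(n, r))
  : 'M[C]_(n, r) * 'M[C]_(n, r) :=
  let Gam := Ups *m invmx Xi in
  let Xt := invmx (diag_mx d) *m (P + X *m Gam) in
  (Xt, - (diag_mx d *m X) + Xt *m Gam).

End Neumann.

(* Main.v *)
Require Import Defs.
From HB Require Import structures.
From mathcomp Require Import all_boot all_order all_algebra.
Import Order.TTheory GRing.Theory Num.Theory.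
Local Open Scope ring_scope.
Set Implicit Arguments. Unset Strict Implicit.

Definition Jm (C : comRingType) (r : nat) : 'M[C]_(r + r) :=
  block_mx 0 1%:M (- 1%:M) 0.

Lemma diag_anti (C : fieldType) (r : nat) (w : 'rV[C]_r) (Z : 'M[C]_r) :
  (forall i j, w 0 i + w 0 j != 0) ->
  diag_mx w *m Z + Z *m diag_mx w = 0 -> Z = 0.
Proof.
move=> hw H; apply/matrixP => i j.
have := congr1 (fun M : 'M_r => M i j) H.
rewrite mul_diag_mx mul_mx_diag !mxE => /eqP.
rewrite [w 0 i * _]mulrC -mulrDr mulf_eq0 (negbTE (hw i j)) orbF => /eqP ->.
by rewrite ?mxE.
Qed.

Lemma Jham (C : comRingType) (r : nat) (V U W : 'M[C]_r) :
  U^T = U -> W^T = W ->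
  (block_mx V U W (- V^T))^T *m Jm C r = - (Jm C r *m block_mx V U W (- V^T)).
Proof.
move=> hU hW; rewrite /Jm tr_block_mx !mulmx_block opp_block_mx hU hW.
rewrite !mulmx0 !mul0mx !mulmx1 !mul1mx !mulNmx !mulmxN !add0r !addr0.
by rewrite ?mulmx1 ?mul1mx linearN /= trmxK !opprK.
Qed.

Lemma symp (C : comRingType) (r : nat) (L : 'M[C]_(r + r)) (D1 K : 'M[C]_r)
  (M N : 'M[C]_(r + r, r)) :
  L^T *m Jm C r = - (Jm C r *m L) -> L *m M = M *m D1 -> L *m N = N *m K ->
  D1^T = D1 ->
  D1 *m (M^T *m Jm C r *m N) + (M^T *m Jm C r *m N) *m K = 0.
Proof.
move=> hL hM hN hD.
have -> : D1 *m (M^T *m Jm C r *m N) = (L *m M)^T *m Jm C r *m N.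
  by rewrite hM trmx_mul hD !mulmxA.
rewrite trmx_mul -[M^T *m L^T *m _]mulmxA hL mulmxN mulNmx.
by rewrite -!mulmxA hN !mulmxA addNr.
Qed.

Lemma Jform (C : comRingType) (r : nat) (A1 B1 A2 B2 : 'M[C]_r) :
  (col_mx A1 B1)^T *m Jm C r *m col_mx A2 B2 = A1^T *m B2 - B1^T *m A2.
Proof.
rewrite /Jm tr_col_mx mul_row_block mul_row_col.
by rewrite !mulmx0 !mulmx1 !mulmxN !mulmx1 add0r addr0 !mulNmx addrC.
Qed.

Lemma LaxHam (C : numClosedFieldType) (n r : nat) (a : 'I_n -> C) lam
  (X P : 'M[C]_(n, r)) :
  (Ainv a lam)^T = Ainv a lam ->
  (Lax a lam X P)^T *m Jm C r = - (Jm C r *m Lax a lam X P).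
Proof.
move=> hB; rewrite /Lax.
have -> : P^T *m Ainv a lam *m X = (X^T *m Ainv a lam *m P)^T.
  by rewrite !trmx_mul trmxK hB mulmxA.
apply: Jham.
  by rewrite !trmx_mul trmxK hB mulmxA.
by rewrite linearB /= trmx1 !trmx_mul trmxK hB mulmxA.
Qed.

Lemma auxA (R : comRingType) (r : nat) (G T D : 'M[R]_r) :
  G *m (T *m - D) = - G *m T *m D.
Proof. by rewrite !mulmxN !mulNmx mulmxA. Qed.

Theorem theorem6p4 (C : numClosedFieldType) (n r : nat)
  (a : 'I_n -> C) (lam : C) (d : 'rV[C]_n)
  (X P : 'M[C]_(n, r)) (w : 'rV[C]_r)
  (Xi1 Ups1 Xi2 Ups2 : 'M[C]_r) :
  (forall i, a i \is Num.real) ->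
  (forall i, lam != a i) ->
  (forall i, d 0 i ^+ 2 = lam - a i) ->
  (forall i j, X i j \is Num.real) ->
  (forall i j, P i j \is Num.real) ->
  in_TV X P ->
  char_poly (Lax a lam X P) = \prod_(i < r) ('X^2 - (w 0 i ^+ 2)%:P) ->
  (forall i j, i != j -> w 0 i != w 0 j) ->
  (forall i j, w 0 i + w 0 j != 0) ->
  eigvec_mat (Lax a lam X P) (- w) Xi1 Ups1 ->
  eigvec_mat (Lax a lam (Bstep d Xi1 Ups1 X P).1 (Bstep d Xi1 Ups1 X P).2) w Xi2 Ups2 ->
  Bstep d Xi2 Ups2 (Bstep d Xi1 Ups1 X P).1 (Bstep d Xi1 Ups1 X P).2 = (- X, - P).
Proof.
move=> _ hlam hd _ _ [hXX _] _ _ hw [E1 u1] [E2 u2].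
rewrite /Bstep /= in E2 *.
set S := diag_mx d in E2 *.
have hdi : forall i, d 0 i != 0.
  move=> i; apply/eqP => h; move: (hd i); rewrite h expr0n /= => /eqP.
  by rewrite eq_sym subr_eq0 (negbTE (hlam i)).
set S' := diag_mx (\row_i (d 0 i)^-1).
have SS' : S *m S' = 1%:M.
  apply/matrixP => i j; rewrite mul_diag_mx !mxE.
  by case: eqP => [->|_]; rewrite ?mulr1n ?mulr0n ?mulr0 // mulfV.
have [Su _] := mulmx1_unit SS'.
set Si := invmx S in E2 *.
have hA : Amat a lam = S *m S.
  apply/matrixP => i j; rewrite /Amat mul_diag_mx !mxE -hd.
  by case: eqP => [->|_]; rewrite ?mulr1n ?mulr0n ?mulr0 // expr2.
have hSS : (S *m S) *m (Si *m Si) = 1%:M.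
  by rewrite -!mulmxA [S *m (Si *m Si)]mulmxA mulmxV // mul1mx mulmxV.
have SSu : S *m S \in unitmx by case: (mulmx1_unit hSS).
set B := Ainv a lam in E2 *.
have hB : B = Si *m Si.
  rewrite /B /Ainv hA.
  transitivity (invmx (S *m S) *m ((S *m S) *m (Si *m Si))).
    by rewrite hSS mulmx1.
  by rewrite mulmxA mulVmx // mul1mx.
have ST : S^T = S by rewrite tr_diag_mx.
have SiT : Si^T = Si by rewrite /Si trmx_inv ST.
have BT : B^T = B by rewrite hB trmx_mul SiT.
have eSSi : S *m Si = 1%:M := mulmxV Su.
have eSiS : Si *m S = 1%:M := mulVmx Su.
have SBS : S *m B *m S = 1%:M.
  rewrite hB !mulmxA. have -> : S *m Si *m Si *m S = (S *m Si) *m (Si *m S) by rewrite !mulmxA. by rewrite eSSi eSiS mulmx1.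
have SiBS : Si *m B *m S = B.
  by rewrite hB -!mulmxA mulVmx // mulmx1.
have u1T : Xi1^T \in unitmx by rewrite unitmx_tr.
set U := X^T *m B *m X. set V := X^T *m B *m P.
have top1 : V *m Xi1 + U *m Ups1 = Xi1 *m diag_mx (- w).
  by move: E1; rewrite /Lax -/B mul_block_col mul_col_mx => /eq_col_mx [].
have Z1 := symp (LaxHam X P BT) E1 E1 (tr_diag_mx _).
rewrite Jform in Z1.
have {}Z1 := diag_anti _ Z1.
have hsym : Xi1^T *m Ups1 = Ups1^T *m Xi1.
  apply/eqP; rewrite -subr_eq0; apply/eqP; apply: Z1 => i j.
  by rewrite !mxE -opprD oppr_eq0.
set Gam := Ups1 *m invmx Xi1 in E2 *.
have GamT : Gam^T = Gam.
  rewrite /Gam trmx_mul trmx_inv.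
  have -> : invmx Xi1^T *m Ups1^T = invmx Xi1^T *m (Ups1^T *m Xi1) *m invmx Xi1.
    by rewrite mulmxA mulmxK.
  by rewrite -hsym mulKmx.
set K1 := V + U *m Gam.
have K1X : K1 *m Xi1 = Xi1 *m diag_mx (- w).
  by rewrite /K1 mulmxDl -mulmxA /Gam mulmxKV.
set T := invmx Xi1^T.
have K1T : K1^T *m T = T *m diag_mx (- w).
  have h : Xi1^T *m K1^T = diag_mx (- w) *m Xi1^T.
    by rewrite -trmx_mul K1X trmx_mul tr_diag_mx.
  transitivity (T *m (Xi1^T *m K1^T) *m T); first by rewrite /T mulKmx.
  by rewrite h -!mulmxA /T mulmxV // mulmx1.
set X1 := Si *m (P + X *m Gam) in E2 *.
set P1 := - (S *m X) + X1 *m Gam in E2 *.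
set R' := X1^T *m B *m (S *m X).
have L1N : Lax a lam X1 P1 *m col_mx 1%:M (- Gam) = col_mx (- R') (Gam *m R').
  rewrite /Lax -/B mul_block_col !mulmx1 !mulmxN mulNmx opprK; congr col_mx.
    by rewrite {1}/P1 mulmxDr mulmxN [X1^T *m B *m (X1 *m Gam)]mulmxA addrK /R' mulmxA.
  have e1 : P1^T *m B *m P1 = - (P1^T *m B *m (S *m X)) + P1^T *m B *m X1 *m Gam.
    by rewrite {3}/P1 mulmxDr mulmxN !mulmxA.
  have e2 : P1^T *m B *m (S *m X) = - 1%:M + Gam *m R'.
    rewrite /P1 linearD /= linearN /= (trmx_mul X1 Gam) (trmx_mul S X) GamT ST !mulmxDl !mulNmx.
    have -> : X^T *m S *m B *m (S *m X) = X^T *m (S *m B *m S) *m X by rewrite !mulmxA.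
    by rewrite SBS mulmx1 hXX /R' !mulmxA.
  by rewrite e1 opprD opprK addrA addrNK e2 addrA subrr add0r.
have RK : R' = K1^T.
  rewrite /R' /X1 (trmx_mul Si _) SiT.
  have -> : (P + X *m Gam)^T *m Si *m B *m (S *m X) = (P + X *m Gam)^T *m (Si *m B *m S) *m X by rewrite !mulmxA.
  rewrite SiBS /K1 !linearD /= (trmx_mul U Gam) (trmx_mul X Gam) GamT /U /V.
  by rewrite !trmx_mul trmxK BT !mulmxDl !mulmxA.
have dN : diag_mx (- w) = - diag_mx w.
  by apply/matrixP => i j; rewrite !mxE mulNrn.
have L1N2 : Lax a lam X1 P1 *m col_mx T (- Gam *m T) = col_mx T (- Gam *m T) *m diag_mx w.
  have -> : col_mx T (- Gam *m T) = col_mx 1%:M (- Gam) *m T by rewrite mul_col_mx mul1mx.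
  rewrite mulmxA L1N !mul_col_mx; congr col_mx.
    by rewrite mulNmx RK K1T dN mulmxN opprK mul1mx.
  by rewrite -mulmxA RK K1T dN; apply: auxA.
have Z2 := symp (LaxHam X1 P1 BT) E2 L1N2 (tr_diag_mx w).
rewrite Jform in Z2.
have {}Z2 := diag_anti hw Z2.
have hU2 : Ups2 = - (Gam *m Xi2).
  have : (- (Xi2^T *m Gam) - Ups2^T) *m T = 0.
    by rewrite -Z2 mulmxDl !mulNmx mulmxN (mulmxA Xi2^T Gam T).
  move/(congr1 (mulmx^~ Xi1^T)); rewrite /T mulmxKV // mul0mx => /eqP.
  rewrite subr_eq0 => /eqP h.
  by rewrite -[Ups2]trmxK -h linearN /= trmx_mul trmxK GamT.
have hG2 : Ups2 *m invmx Xi2 = - Gam by rewrite hU2 mulNmx mulmxK.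
rewrite hG2.
have hX2 : Si *m (P1 + X1 *m - Gam) = - X.
  by rewrite mulmxN /P1 addrK mulmxN mulKmx.
by rewrite hX2 /X1 mulKVmx // mulNmx mulmxN opprK opprD addrNK.
Qed.
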